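(* Let $1<p<N$, $q>0$, $\mu>0$, $g(s)=\frac{(p-1)^{q-p+1}}{\mu^q}(1+\mu s)^{p-1}|\ln(1+\mu s)|^{q-1}\ln(1+\mu s)$ for $s>-1/\mu$, and $G(s)=\int_0^sg(t)\,dt$. Then $H(s):=g(s)s-pG(s)\to+\infty$ as $s\to+\infty$. *)

(* Defs.v *)
From Stdlib Require Import Reals.
From Coquelicot Require Import Coquelicot.
Open Scope R_scope.

(* |x|^(q-1) * x, with the value 0 at x = 0 (its continuous extension for q > 0). *)
Definition spow (q x : R) : R :=
  if Req_EM_T x 0 then 0 else Rpower (Rabs x) (q - 1) * x.

Definition gfun (p q mu : R) (s : R) : R :=
  Rpower (p - 1) (q - p + 1) / Rpower mu q
  * Rpower (1 + mu * s) (p - 1) * spow q (ln (1 + mu * s)).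

Definition Gfun (p q mu : R) (s : R) : R := RInt (gfun p q mu) 0 s.

Definition Hfun (p q mu : R) (s : R) : R := gfun p q mu s * s - p * Gfun p q mu s.

(* Main.v *)
Require Import Defs.
From Stdlib Require Import Reals Lra Psatz.
From Coquelicot Require Import Coquelicot.
Open Scope R_scope.

Definition Cst (p q mu : R) := Rpower (p - 1) (q - p + 1) / Rpower mu q.
Definition gexp p q mu y := Cst p q mu * exp ((p-1) * ln (1 + mu*y)) *
   (exp ((q-1) * ln (ln (1 + mu*y))) * ln (1 + mu*y)).
Definition dg p q mu y := Cst p q mu * exp ((p-1) * ln (1 + mu*y)) *
   exp ((q-1) * ln (ln (1 + mu*y))) * (mu / (1 + mu*y) * ((p-1) * ln (1+mu*y) + q)).

Lemma Cst_pos p q mu : 0 < Cst p q mu.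
Proof. unfold Cst, Rpower. apply Rdiv_lt_0_compat; apply exp_pos. Qed.

Lemma ln_pos' x : 1 < x -> 0 < ln x.
Proof. intros H. rewrite <- ln_1. apply ln_increasing; lra. Qed.

Lemma gfun_pos_form p q mu y : 0 < mu -> 0 < y -> gfun p q mu y = gexp p q mu y.
Proof.
  intros hmu hy. assert (Ht : 1 < 1 + mu * y) by nra.
  assert (HL := ln_pos' _ Ht).
  unfold gfun, gexp, spow, Cst. destruct (Req_EM_T (ln (1 + mu * y)) 0) as [e|_]; [lra|].
  rewrite Rabs_pos_eq by lra. unfold Rpower. reflexivity.
Qed.

Lemma g_deriv p q mu y : 0 < mu -> 0 < y -> is_derive (gfun p q mu) y (dg p q mu y).
Proof.
  intros hmu hy.
  apply is_derive_ext_loc with (f := gexp p q mu).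
  { apply (locally_interval _ y 0 p_infty); simpl; auto.
    intros z Hz _. symmetry. apply gfun_pos_form; auto. }
  assert (Ht : 1 < 1 + mu * y) by nra.
  assert (HL := ln_pos' _ Ht).
  unfold gexp, dg. auto_derive.
  - repeat split; lra.
  - field; lra.
Qed.

Lemma spow_cont q : 0 < q -> continuous (spow q) 0.
Proof.
  intros hq. apply filterlim_locally. intros eps.
  assert (Hd : 0 < Rpower eps (/ q)) by (unfold Rpower; apply exp_pos).
  exists (mkposreal _ Hd). intros x Hx.
  change (Rabs (spow q x - spow q 0) < eps).
  change (Rabs (x - 0) < Rpower eps (/ q)) in Hx.
  rewrite Rminus_0_r in Hx.
  unfold spow. destruct (Req_EM_T 0 0) as [_|n]; [|lra].
  destruct (Req_EM_T x 0) as [e|n]; [rewrite Rminus_0_r, Rabs_R0; apply cond_pos|].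
  rewrite Rminus_0_r, Rabs_mult.
  assert (Hx0 : 0 < Rabs x) by (apply Rabs_pos_lt; auto).
  rewrite (Rabs_pos_eq (Rpower _ _)) by (unfold Rpower; left; apply exp_pos).
  rewrite <- (Rpower_1 (Rabs x)) at 2 by auto.
  rewrite <- Rpower_plus. replace (q - 1 + 1) with q by ring.
  apply Rlt_le_trans with (Rpower (Rpower eps (/ q)) q).
  - apply Rlt_Rpower_l; auto.
  - rewrite Rpower_mult. rewrite Rinv_l by lra. rewrite Rpower_1 by apply cond_pos. lra.
Qed.

Lemma g_cont p q mu z : 0 < q -> 0 < mu -> 0 <= z -> continuous (gfun p q mu) z.
Proof.
  intros hq hmu hz. destruct hz as [hz|hz].
  { apply (@ex_derive_continuous R_AbsRing R_NormedModule). eexists. apply g_deriv; auto. }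
  subst z.
  assert (H1 : continuous (fun s => Cst p q mu * Rpower (1 + mu * s) (p - 1)) 0).
  { apply (@ex_derive_continuous R_AbsRing R_NormedModule). unfold Rpower. auto_derive. lra. }
  assert (H2 : continuous (fun s => ln (1 + mu * s)) 0).
  { apply (@ex_derive_continuous R_AbsRing R_NormedModule). auto_derive. lra. }
  assert (H3 : continuous (fun s => spow q (ln (1 + mu * s))) 0).
  { apply continuous_comp; auto. replace (ln (1 + mu * 0)) with 0.
    - apply spow_cont; auto.
    - rewrite Rmult_0_r, Rplus_0_r, ln_1. reflexivity. }
  generalize (continuous_mult _ _ _ H1 H3). apply continuous_ext.
  intros s. reflexivity.
Qed.

Lemma G_deriv p q mu s : 0 < q -> 0 < mu -> 0 < s ->
  is_derive (Gfun p q mu) s (gfun p q mu s).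
Proof.
  intros hq hmu hs. apply is_derive_RInt with (a := 0).
  - apply (locally_interval _ s 0 p_infty); simpl; auto.
    intros b Hb _. unfold Gfun. apply (@RInt_correct R_CompleteNormedModule). apply (@ex_RInt_continuous R_CompleteNormedModule).
    intros z Hz. apply g_cont; auto.
    rewrite Rmin_left in Hz by lra. lra.
  - apply g_cont; lra.
Qed.

Lemma H_deriv p q mu s : 0 < q -> 0 < mu -> 0 < s ->
  is_derive (Hfun p q mu) s (dg p q mu s * s + gfun p q mu s - p * gfun p q mu s).
Proof.
  intros hq hmu hs. unfold Hfun.
  generalize (g_deriv p q mu s hmu hs) (G_deriv p q mu s hq hmu hs). intros Hg HG.
  auto_derive.
  - split; [eexists; eauto|split; [eexists; eauto|auto]].
  - replace (Derive (fun x : R => gfun p q mu x) s) with (dg p q mu s) by (symmetry; apply is_derive_unique; exact Hg).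
    replace (Derive (fun x : R => Gfun p q mu x) s) with (gfun p q mu s) by (symmetry; apply is_derive_unique; exact HG). ring.
Qed.

Lemma ln_le_2sqrt x : 1 <= x -> ln x <= 2 * sqrt x.
Proof.
  intros hx. assert (hs : 0 < sqrt x) by (apply sqrt_lt_R0; lra).
  rewrite <- (sqrt_sqrt x) at 1 by lra. rewrite ln_mult by auto.
  assert (h := exp_ineq1_le (ln (sqrt x))). rewrite exp_ln in h by auto. lra.
Qed.

Lemma sqrt_ge a x : 0 <= a -> a * a <= x -> a <= sqrt x.
Proof. intros ha h. rewrite <- (sqrt_square a) by auto. apply sqrt_le_1_alt; auto. Qed.

Definition Ub p q := 4 * (p - 1) / q + 2.
Definition Ma p q := 2 * Rabs (q - 1) / (p - 1).

Lemma dH_lower p q mu s : 1 < p -> 0 < q -> 0 < mu -> 0 < s ->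
  Ub p q * Ub p q <= 1 + mu * s -> exp (Ma p q * Ma p q + 1) <= 1 + mu * s ->
  Cst p q mu * q / 2 <= dg p q mu s * s + gfun p q mu s - p * gfun p q mu s.
Proof.
  intros hp hq hmu hs hU hM.
  rewrite gfun_pos_form by auto. unfold gexp, dg.
  assert (Ht : 1 < 1 + mu * s) by nra.
  assert (HL := ln_pos' _ Ht).
  assert (Heq : forall C E1 E2, C * E1 * E2 * (mu / (1 + mu * s) * ((p - 1) * ln (1 + mu * s) + q)) * s +
     C * E1 * (E2 * ln (1 + mu * s)) - p * (C * E1 * (E2 * ln (1 + mu * s)))
     = C * (E1 * E2) / (1 + mu * s) * (q * ((1 + mu * s) - 1) - (p - 1) * ln (1 + mu * s))).
  { intros. field. lra. }
  rewrite Heq; clear Heq.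
  set (t := 1 + mu * s) in *. set (L := ln t) in *.
  assert (hC := Cst_pos p q mu).
  assert (A1 : q * t / 2 <= q * (t - 1) - (p - 1) * L).
  { assert (hu := ln_le_2sqrt t ltac:(lra)). fold L in hu.
    assert (hU0 : 0 <= Ub p q) by (unfold Ub; assert (0 < 4 * (p-1) / q) by (apply Rdiv_lt_0_compat; lra); lra).
    assert (hu2 := sqrt_ge _ _ hU0 hU).
    assert (hqU : q * Ub p q = 4 * (p - 1) + 2 * q) by (unfold Ub; field; lra).
    assert (htt := sqrt_sqrt t ltac:(lra)).
    set (u := sqrt t) in *.
    assert (hU2 : 2 <= Ub p q) by (unfold Ub; assert (0 < 4 * (p-1) / q) by (apply Rdiv_lt_0_compat; lra); lra).
    assert (h1 : q * Ub p q <= q * u) by (apply Rmult_le_compat_l; lra).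
    assert (h2 : u * (4 * (p - 1) + 2 * q) <= u * (q * u)) by (apply Rmult_le_compat_l; lra).
    assert (h3 : (p - 1) * L <= (p - 1) * (2 * u)) by (apply Rmult_le_compat_l; lra).
    nra. }
  assert (A2 : 1 <= exp ((p - 1) * L) * exp ((q - 1) * ln L)).
  { rewrite <- exp_plus. 
    assert (hLM : Ma p q * Ma p q + 1 <= L).
    { unfold L. rewrite <- (ln_exp (Ma p q * Ma p q + 1)). apply ln_le; auto. apply exp_pos. }
    assert (hMa0 : 0 <= Ma p q) by (unfold Ma; apply Rmult_le_pos; [assert (0 <= Rabs (q-1)) by apply Rabs_pos; lra| left; apply Rinv_0_lt_compat; lra]).
    assert (hML : Ma p q * Ma p q <= L) by lra.
    assert (hw := sqrt_ge _ _ hMa0 hML).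
    assert (hww := sqrt_sqrt L ltac:(lra)).
    assert (hlnL := ln_le_2sqrt L ltac:(nra)).
    assert (hlnL0 : 0 <= ln L) by (rewrite <- ln_1; apply ln_le; nra).
    assert (hpa : (p - 1) * Ma p q = 2 * Rabs (q - 1)) by (unfold Ma; field; lra).
    assert (hab : - Rabs (q - 1) * ln L <= (q - 1) * ln L).
    { destruct (Rle_dec 0 (q - 1)).
      - rewrite Rabs_pos_eq by auto. nra.
      - rewrite Rabs_left by lra. nra. }
    set (w := sqrt L) in *.
    assert (0 <= (p - 1) * L + (q - 1) * ln L).
    { assert (hw0 : 0 <= w) by (unfold w; apply sqrt_pos).
      assert (hr0 : 0 <= Rabs (q - 1)) by apply Rabs_pos.
      assert (h4 : ((p - 1) * w) * Ma p q <= ((p - 1) * w) * w) by (apply Rmult_le_compat_l; nra).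
      assert (h5 : Rabs (q - 1) * ln L <= Rabs (q - 1) * (2 * w)) by (apply Rmult_le_compat_l; lra).
      nra. }
    assert (h := exp_ineq1_le ((p - 1) * L + (q - 1) * ln L)). lra. }
  assert (ht0 : 0 < t) by lra.
  apply Rle_trans with (Cst p q mu * (exp ((p - 1) * L) * exp ((q - 1) * ln L)) / t * (q * t / 2)).
  - replace (Cst p q mu * (exp ((p - 1) * L) * exp ((q - 1) * ln L)) / t * (q * t / 2))
      with (Cst p q mu * q / 2 * (exp ((p - 1) * L) * exp ((q - 1) * ln L))) by (field; lra).
    assert (0 < Cst p q mu * q / 2) by (apply Rmult_lt_0_compat; [apply Rmult_lt_0_compat|]; lra).
    rewrite <- (Rmult_1_r (Cst p q mu * q / 2)) at 1. apply Rmult_le_compat_l; lra.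
  - apply Rmult_le_compat_l; auto.
    apply Rmult_le_pos; [nra| left; apply Rinv_0_lt_compat; lra].
Qed.

Theorem lemma3p1 (N p q mu : R) (hp1 : 1 < p) (hpN : p < N) (hq : 0 < q) (hmu : 0 < mu) :
  is_lim (Hfun p q mu) p_infty p_infty.
Proof.
  set (dH := fun s => dg p q mu s * s + gfun p q mu s - p * gfun p q mu s).
  set (s1 := (Ub p q * Ub p q + exp (Ma p q * Ma p q + 1)) / mu).
  set (c := Cst p q mu * q / 2).
  assert (hc : 0 < c) by (unfold c; assert (h := Cst_pos p q mu); apply Rmult_lt_0_compat; [apply Rmult_lt_0_compat|]; lra).
  assert (hE := exp_pos (Ma p q * Ma p q + 1)).
  assert (hs1 : 0 < s1) by (unfold s1; apply Rdiv_lt_0_compat; nra).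
  assert (hmus1 : mu * s1 = Ub p q * Ub p q + exp (Ma p q * Ma p q + 1)) by (unfold s1; field; lra).
  assert (key : forall x, s1 < x -> Hfun p q mu s1 + c * (x - s1) <= Hfun p q mu x).
  { intros x hx.
    destruct (MVT_gen (Hfun p q mu) s1 x dH) as [c0 [hc0 he]].
    - intros y hy. rewrite Rmin_left in hy by lra. rewrite Rmax_right in hy by lra.
      apply H_deriv; lra.
    - intros y hy. rewrite Rmin_left in hy by lra. rewrite Rmax_right in hy by lra.
      apply continuity_pt_filterlim.
      apply (@ex_derive_continuous R_AbsRing R_NormedModule).
      eexists. apply H_deriv; lra.
    - rewrite Rmin_left in hc0 by lra. rewrite Rmax_right in hc0 by lra.
      assert (hd : c <= dH c0).
      { unfold dH, c. apply dH_lower; try lra.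
        - assert (mu * s1 <= mu * c0) by (apply Rmult_le_compat_l; lra). nra.
        - assert (mu * s1 <= mu * c0) by (apply Rmult_le_compat_l; lra). nra. }
      assert (c * (x - s1) <= dH c0 * (x - s1)) by (apply Rmult_le_compat_r; lra).
      lra. }
  unfold is_lim, filterlim, filter_le, filtermap; simpl.
  intros P [M HM].
  exists (Rmax s1 (s1 + (M - Hfun p q mu s1) / c)).
  intros x Hx. apply HM.
  assert (h1 : s1 < x) by (eapply Rle_lt_trans; [apply Rmax_l|]; eauto).
  assert (h2 : s1 + (M - Hfun p q mu s1) / c < x) by (eapply Rle_lt_trans; [apply Rmax_r|]; eauto).
  assert (h3 := key x h1).
  assert (h4 : M - Hfun p q mu s1 < c * (x - s1)).
  { replace (M - Hfun p q mu s1) with (c * ((M - Hfun p q mu s1) / c)) by (field; lra).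
    apply Rmult_lt_compat_l; lra. }
  lra.
Qed.
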